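(* Let $\alpha\in(0,1)$ and let $U_i,U_i^0$, $i\in[m]$, be real numbers. Define $G_i=\mathrm{sign}(U_i^0-U_i)\cdot[\exp(-U_i)\vee\exp(-U_i^0)]$, $$\tau=\inf\Big\{\lambda\in\{|G_i|\}_{i=1}^m:\frac{1+\sum_{i=1}^m\mathbb{I}(G_i\le-\lambda)}{\sum_{i=1}^m\mathbb{I}(G_i\ge\lambda)}\le\alpha\Big\}$$ (with $\tau=\infty$ if the set is empty), $\mathcal{R}=\{i\in[m]:G_i\ge\tau\}$, and $e_i=\frac{m\,\mathbb{I}(G_i\ge\tau)}{1+\sum_{j=1}^m\mathbb{I}(G_j\le-\tau)}$. Let $e_{(1)}\ge\cdots\ge e_{(m)}$ be the order statistics of the $e_i$, $\hat k=\max\{i:ie_{(i)}/m\ge1/\alpha\}$, and $\mathcal{R}_{ebh}=\{i\in[m]:e_i\ge e_{(\hat k)}\}$ (the $e$-BH rejection set). Then $\mathcal{R}_{ebh}=\mathcal{R}$. *)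

(* Defs.v *)
From HB Require Import structures.
From mathcomp Require Import all_boot all_order all_algebra.
From mathcomp Require Import classical_sets reals ereal sequences exp.
Set Implicit Arguments. Unset Strict Implicit. Unset Printing Implicit Defensive.
Import Order.TTheory GRing.Theory Num.Theory.
Local Open Scope ring_scope.

Definition Gstat (R : realType) (m : nat) (U U0 : 'I_m -> R) (i : 'I_m) : R :=
  Num.sg (U0 i - U i) * Num.max (expR (- U i)) (expR (- U0 i)).

Definition Nneg (R : realType) (m : nat) (G : 'I_m -> R) (lam : R) : nat :=
  #|[set i | G i <= - lam]|.
Definition Npos (R : realType) (m : nat) (G : 'I_m -> R) (lam : R) : nat :=
  #|[set i | lam <= G i]|.

(* the condition (1 + #neg)/#pos <= alpha; a zero denominator makes the
   ratio +oo, so the condition fails in that case *)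
Definition tau_cond (R : realType) (m : nat) (alpha : R) (G : 'I_m -> R)
    (lam : R) : bool :=
  (0 < Npos G lam)%N &&
  (((1 + Nneg G lam)%:R / (Npos G lam)%:R) <= alpha).

Definition tau (R : realType) (m : nat) (alpha : R) (G : 'I_m -> R) : \bar R :=
  ereal_inf
    [set (`|G i|)%:E | i in [set i : 'I_m | tau_cond alpha G `|G i| ]]%classic.

Definition rejset (R : realType) (m : nat) (alpha : R) (G : 'I_m -> R)
    : {set 'I_m} :=
  [set i | (tau alpha G <= (G i)%:E)%E].

Definition evalue (R : realType) (m : nat) (alpha : R) (G : 'I_m -> R)
    (i : 'I_m) : R :=
  (m * ((tau alpha G <= (G i)%:E)%E : nat))%:R /
  (1 + #|[set j | ((G j)%:E <= - tau alpha G)%E]|)%:R.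

(* order statistic e_(k), k = 1..m, with e_(1) >= ... >= e_(m) *)
Definition ord_stat (R : realType) (m : nat) (e : 'I_m -> R) (k : nat) : R :=
  nth 0 (sort (fun x y : R => y <= x) [seq e i | i <- enum 'I_m]) k.-1.

(* khat = max { k in [m] : k e_(k) / m >= 1/alpha }, with khat = 0 if empty *)
Definition khat (R : realType) (m : nat) (alpha : R) (e : 'I_m -> R) : nat :=
  \max_(k < m.+1 | (0 < k)%N && (1 / alpha <= k%:R * ord_stat e k / m%:R)) k.

Definition ebh (R : realType) (m : nat) (alpha : R) (e : 'I_m -> R)
    : {set 'I_m} :=
  if khat alpha e == 0%N then finset.set0
  else [set i | ord_stat e (khat alpha e) <= e i].

(* Main.v *)
Require Import Defs.
From HB Require Import structures.
From mathcomp Require Import all_boot all_order all_algebra.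
From mathcomp Require Import classical_sets reals ereal sequences exp.
From mathcomp Require Import zify ring.
Import Order.TTheory GRing.Theory Num.Theory.
Local Open Scope ring_scope.

Lemma count_card (m : nat) (b : pred 'I_m) : count b (enum 'I_m) = #|b|.
Proof. by rewrite enumT cardE /enum_mem size_filter. Qed.

Lemma sort_form (R : realType) (m : nat) (b : pred 'I_m) (c : R) (hc : 0 <= c) :
  sort (fun x y : R => y <= x) [seq (if b i then c else 0) | i <- enum 'I_m]
  = nseq #|b| c ++ nseq (m - #|b|) 0.
Proof.
have tr : transitive (fun x y : R => y <= x).
  by move=> x y z hyx hzy; exact: le_trans hzy hyx.
have an : antisymmetric (fun x y : R => y <= x).
  by move=> x y /andP[h1 h2]; apply/le_anti; rewrite h1 h2.
apply: (sorted_eq tr an).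
- apply: sort_sorted => x y; exact: le_total.
- have p0 : forall j, path (fun x y : R => y <= x) 0 (nseq j 0).
    by elim=> //= j ->; rewrite lexx.
  have pc : forall k j, path (fun x y : R => y <= x) c (nseq k c ++ nseq j 0).
    elim=> [|k IH] j /=; last by rewrite lexx IH.
    by case: j => //= j; rewrite hc p0.
  by case: #|b| => [|k] /=; [case: (m - 0)%N => //= j; apply: p0 | apply: pc].
- rewrite perm_sort; apply/permP => p.
  rewrite count_cat !count_nseq count_map.
  rewrite (eq_count (a2 := fun i => if b i then p c else p 0)); last first.
    by move=> i /=; case: (b i).
  have hb : (#|b| <= m)%N by rewrite -[X in (_ <= X)%N]card_ord max_card.
  have -> : forall (s : seq 'I_m), count (fun i => if b i then p c else p 0%R) s
      = (p c * count b s + p 0%R * count (predC b) s)%N.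
    elim=> [|x s IH] /=; first by rewrite !muln0.
    rewrite IH; case: (b x) => /=; case: (p c); case: (p 0%R) => /=; lia.
  have hC : count (predC b) (enum 'I_m) = (m - #|b|)%N.
    have := count_predC b (enum 'I_m).
    rewrite count_card size_enum_ord; lia.
  by rewrite hC count_card.
Qed.

Lemma ebh_form (R : realType) (m : nat) (alpha : R) (ha : 0 < alpha)
  (e : 'I_m -> R) (b : pred 'I_m) (c : R) (hc : 0 < c)
  (he : forall i, e i = if b i then c else 0) :
  ebh alpha e = if (0 < #|b|)%N && (1 / alpha <= #|b|%:R * c / m%:R)
                then [set i | b i] else finset.set0.
Proof.
have hs : ord_stat e = fun k => nth 0 (nseq #|b| c ++ nseq (m - #|b|) 0) k.-1.
  by rewrite /ord_stat (eq_map he) sort_form // ltW.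
have os1 : forall k, (0 < k)%N -> (k <= #|b|)%N -> ord_stat e k = c.
  move=> k k0 kb; rewrite hs nth_cat size_nseq !nth_nseq.
  by case: k k0 kb => //= k _ ->.
have os2 : forall k, (#|b| < k)%N -> ord_stat e k = 0.
  move=> k kb; rewrite hs nth_cat size_nseq.
  have -> : (k.-1 < #|b|)%N = false by case: k kb => //= k; rewrite ltnNge => /negbTE.
  by rewrite nth_nseq; case: ifP.
have ia : 0 < 1 / alpha by rewrite mul1r invr_gt0.
have mono : forall k, (k <= #|b|)%N -> k%:R * c / m%:R <= #|b|%:R * c / m%:R.
  move=> k kb; rewrite -!mulrA; apply: ler_wpM2r; last by rewrite ler_nat.
  by rewrite mulr_ge0 ?invr_ge0 ?ler0n ?ltW.
have kh : khat alpha e = if (0 < #|b|)%N && (1 / alpha <= #|b|%:R * c / m%:R)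
                         then #|b| else 0%N.
  rewrite /khat; case: ifP => hcond.
  - apply/eqP; rewrite eqn_leq; apply/andP; split.
    + apply/bigmax_leqP => k /andP[k0 hk]; rewrite leqNgt; apply/negP => hlt.
      move: hk; rewrite os2 // mulr0 mul0r => hk.
      by move: (lt_le_trans ia hk); rewrite ltxx.
    + have hP : (#|b| < m.+1)%N.
        by rewrite ltnS -[X in (_ <= X)%N]card_ord max_card.
      move/andP: hcond => [h0 h1].
      apply: (leq_bigmax_cond (Ordinal hP)) => /=.
      by rewrite h0 os1.
  - apply/eqP; rewrite -leqn0; apply/bigmax_leqP => k /andP[k0 hk].
    case: (leqP k #|b|) => kb.
      move: hk; rewrite os1 // => hk.
      move/negbT: hcond; rewrite negb_and => /orP[].
        by rewrite -leqNgt leqn0 => /eqP h; move: kb; rewrite h leqn0 => /eqP hk0; move: k0; rewrite hk0.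
      by rewrite (le_trans hk (mono _ kb)).
    move: hk; rewrite os2 // mulr0 mul0r => hk.
    by move: (lt_le_trans ia hk); rewrite ltxx.
rewrite /ebh kh; case hcond: (_ && _); last by [].
move/andP: (hcond) => [h0 _].
rewrite (negbTE (lt0n_neq0 h0)) os1 //.
apply/setP => i; rewrite !inE he; case: (b i); first by rewrite lexx.
by rewrite leNgt hc.
Qed.

Lemma tau_cases (R : realType) (m : nat) (alpha : R) (G : 'I_m -> R) :
  tau alpha G = +oo%E \/
  exists i, tau alpha G = (`|G i|)%:E /\ tau_cond alpha G `|G i|.
Proof.
case: (pickP (fun i => tau_cond alpha G `|G i|)) => [i0 hi0|hn].
- right; case: (@arg_minP _ _ _ i0 (fun i => tau_cond alpha G `|G i|) (fun i => `|G i|) hi0) => i hi hmin.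
  exists i; split => //.
  apply/le_anti/andP; split.
  + by apply: ereal_inf_lbound; exists i.
  + by apply/ereal_infP => y [j hj <-]; rewrite lee_fin; exact: hmin.
- left; rewrite /tau.
  have -> : [set (`|G i|)%:E | i in [set i : 'I_m | tau_cond alpha G `|G i| ]]%classic
            = set0%classic.
    by apply/seteqP; split => y //= [j hj _]; rewrite /= hn in hj.
  exact: ereal_inf0.
Qed.

Theorem proposition3 (R : realType) (m : nat) (alpha : R)
    (halpha : 0 < alpha < 1) (U U0 : 'I_m -> R) :
  ebh alpha (evalue alpha (Gstat U U0)) = rejset alpha (Gstat U U0).
Proof.
move: (Gstat U U0) => G; move: G.
case: m U U0 => [|m] U U0 G; first by apply/setP => -[].
move/andP: halpha => [ha _].
set d : R := (1 + #|[set j | ((G j)%:E <= - tau alpha G)%E]|)%:R.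
have d0 : 0 < d by rewrite /d ltr0n.
set c : R := (m.+1)%:R / d.
have c0 : 0 < c by rewrite /c divr_gt0 ?ltr0n.
have he : forall i, evalue alpha G i = if (tau alpha G <= (G i)%:E)%E then c else 0.
  by move=> i; rewrite /evalue; case: (_ <= _)%E; rewrite ?muln1 ?muln0 ?mul0r.
rewrite (@ebh_form R _ alpha ha _ _ c c0 he).
case: (tau_cases _ _ alpha G) => [ht | [i0 [ht hcond]]].
- have -> : #|(fun i => (tau alpha G <= (G i)%:E)%E)| = 0%N.
    by apply: eq_card0 => i; rewrite !inE /= unfold_in /= ht leNgt ltey.
  by apply/setP => i; rewrite /rejset !inE ht leNgt ltey.
- set t := `|G i0| in ht hcond.
  have hb : #|(fun i => (tau alpha G <= (G i)%:E)%E)| = Npos G t.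
    by rewrite /Npos; apply: eq_card => i; rewrite inE /= unfold_in /= ht lee_fin.
  have hd : d = (1 + Nneg G t)%:R.
    rewrite /d /Nneg; congr ((1 + _)%:R); apply: eq_card => i.
    by rewrite !inE ht -EFinN lee_fin.
  move/andP: (hcond) => [hP hr].
  rewrite hb hP /=.
  have -> : 1 / alpha <= (Npos G t)%:R * c / m.+1%:R.
    have -> : (Npos G t)%:R * c / m.+1%:R = (Npos G t)%:R / d.
      by rewrite /c; field; rewrite !nat1r !pnatr_eq0.
    rewrite mul1r -invf_div lef_pV2 ?posrE ?divr_gt0 ?ltr0n //.
    by rewrite hd.
  by apply/setP => i; rewrite /rejset !inE.
Qed.
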